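(* Under the setup described in the context (a connected graph $G$ on $n$ vertices with $\mathrm{col}(G)=d\geq 3$, $M=K_1\vee G$ with apex $w$, and an $m$-fold cover $\mathcal{H}=(L,H)$ of $M$ with $m\geq d+3$ in which $E_H(L(u),L(v))$ is a perfect matching for every $uv\in E(M)$): if $L(w)$ contains exactly $s$ vertices that are not level vertices, then $$P_{DP}(M,\mathcal{H})\geq m\,P_{DP}(G,m-1)+s\,(m-d-2)^{n-2}.$$
   Context: All graphs are finite and simple. $\mathrm{col}(G)$ is the smallest $d$ such that some ordering of $V(G)$ has each vertex with at most $d-1$ earlier neighbors. $M=K_1\vee G$ is the join of $G$ with a single new vertex $w$. A cover of a graph $G$ is a pair $\mathcal{H}=(L,H)$ where $H$ is a graph and $L:V(G)\to\mathcal{P}(V(H))$ satisfies: (1) the sets $L(u)$ partition $V(H)$; (2) each $H[L(u)]$ is complete; (3) if $E_H(L(u),L(v))\neq\emptyset$ then $u=v$ or $uv\in E(G)$; (4) if $uv\in E(G)$ then $E_H(L(u),L(v))$ is a matching. $E_H(S,U)$ is the set of edges of $H$ between $S$ and $U$; the cover is $m$-fold if all $|L(u)|=m$; an $\mathcal{H}$-coloring is an independent set of $H$ of size $|V(G)|$, $P_{DP}(G,\mathcal{H})$ counts them, and $P_{DP}(G,m)$ is the minimum of $P_{DP}(G,\mathcal{H})$ over $m$-fold covers. Setup: write $L(w)=\{(w,j):j\in[m]\}$; for $j\in[m]$ and $v\in V(G)$ let $H^{(j)}=H-N_H[(w,j)]$ and $L^{(j)}(v)=L(v)\setminus N_H((w,j))$,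 so $\mathcal{H}^{(j)}=(L^{(j)},H^{(j)})$ is an $(m-1)$-fold cover of $G$. Cross-edges of $H^{(j)}$ are its edges joining $L^{(j)}(x)$ and $L^{(j)}(y)$ for distinct $x,y\in V(G)$. The vertex $(w,t)$ is a level vertex if $H^{(t)}$ has exactly $|E(G)|(m-1)$ cross-edges. *)

(* Defs.v *)
From HB Require Import structures.
From mathcomp Require Import all_boot.
Set Implicit Arguments. Unset Strict Implicit. Unset Printing Implicit Defensive.

Definition simple_graph (T : finType) (r : rel T) : bool :=
  [forall x, ~~ r x x] && [forall x, forall y, r x y ==> r y x].

Definition connected_graph (T : finType) (r : rel T) : Prop :=
  forall x y, connect r x y.

Definition num_edges (T : finType) (r : rel T) : nat :=
  #|[set E : {set T} | [exists u, exists v, (E == [set u; v]) && r u v]]|.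

Definition col_ok (T : finType) (r : rel T) (d : nat) : Prop :=
  exists s : seq T, [/\ uniq s, (forall v, v \in s) &
     forall s1 x s2, s = s1 ++ x :: s2 -> count (r x) s1 < d].

Definition is_col (T : finType) (r : rel T) (d : nat) : Prop :=
  col_ok r d /\ forall d', col_ok r d' -> d <= d'.

(* M = K_1 \/ G : vertex None is the apex w. *)
Definition join_rel (T : finType) (r : rel T) : rel (option T) :=
  fun a b => match a, b with
   | Some x, Some y => r x y
   | None, Some _ | Some _, None => true
   | None, None => false end.

Definition is_cover (W X : finType) (eW : rel W) (h : rel X)
    (L : W -> {set X}) : bool :=
  [&& simple_graph h,
      [forall x, exists u, x \in L u],
      [forall u, forall v, forall x, (x \in L u) && (x \in L v) ==> (u == v)],
      [forall u, forall x, forall y, [&& x \in L u, y \in L u & x != y] ==> h x y],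
      [forall u, forall v, forall x, forall y,
          [&& x \in L u, y \in L v & h x y] ==> (u == v) || eW u v] &
      (* (4) for uv in E(G), E_H(L(u),L(v)) is a matching
         (stated for both orders since eW is symmetric) *)
      [forall u, forall v, eW u v ==> [forall x, forall y, forall y',
          [&& x \in L u, y \in L v, y' \in L v, h x y & h x y'] ==> (y == y')]]].

Definition mfold (W X : finType) (L : W -> {set X}) (m : nat) : bool :=
  [forall u, #|L u| == m].

(* every E_H(L(u),L(v)), uv in E, is a perfect matching (given matching + equal
   sizes, it suffices that each vertex of L(u) has a neighbour in L(v)). *)
Definition perfect_matchings (W X : finType) (eW : rel W) (h : rel X)
    (L : W -> {set X}) : bool :=
  [forall u, forall v, eW u v ==>
     [forall x in L u, exists y in L v, h x y]].

Definition indep (X : finType) (h : rel X) (I : {set X}) : bool :=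
  [forall x in I, forall y in I, ~~ h x y].

Definition ncol (W X : finType) (h : rel X) : nat :=
  #|[set I : {set X} | indep h I & #|I| == #|W|]|.

Definition canL (W : finType) (m : nat) (u : W) : {set W * 'I_m} :=
  [set x | x.1 == u].

(* P_DP(G, m): minimum over all m-fold covers (every m-fold cover is isomorphic
   to a canonical one; #|{set W * 'I_m}| is an upper bound for all counts). *)
Definition PDP (W : finType) (eW : rel W) (m : nat) : nat :=
  \big[minn/#|{set W * 'I_m}|]_(E : {set (W * 'I_m) * (W * 'I_m)} |
        is_cover eW (fun a b => (a, b) \in E) (@canL W m))
     ncol W (fun a b => (a, b) \in E).

Definition closed_nbhd (X : finType) (h : rel X) (t : X) : {set X} :=
  [set x | (x == t) || h t x].

Definition cross_edges (V X : finType) (h : rel X) (L : option V -> {set X})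
    (t : X) : {set {set X}} :=
  [set E : {set X} | [exists a, exists b,
     [&& E == [set a; b], h a b, a \notin closed_nbhd h t, b \notin closed_nbhd h t &
         [exists u, exists v, [&& u != v, a \in L (Some u) & b \in L (Some v)]]]]].

Definition level_vertex (V X : finType) (e : rel V) (h : rel X)
    (L : option V -> {set X}) (m : nat) (t : X) : bool :=
  #|cross_edges h L t| == num_edges e * (m - 1).

(* Main.v *)
Require Import Defs.
From HB Require Import structures.
From mathcomp Require Import all_boot.
From mathcomp Require Import zify.
Set Implicit Arguments. Unset Strict Implicit. Unset Printing Implicit Defensive.


Lemma bigmin_le (I : eqType) (r : seq I) (P : pred I) (F : I -> nat) x j :
  j \in r -> P j -> \big[minn/x]_(i <- r | P i) F i <= F j.
Proof.
elim: r => [|a r IH] //= ; rewrite inE big_cons => /orP [/eqP <-|jr] Pj.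
  by rewrite Pj geq_minl.
case: (P a); last exact: IH.
exact: leq_trans (geq_minr _ _) (IH jr Pj).
Qed.

Lemma card_pairs (A B : finType) (P : pred A) (Q : A -> pred B) :
  #|[set p : A * B | P p.1 && Q p.1 p.2]| = \sum_(a | P a) #|[set b | Q a b]|.
Proof.
rewrite -sum1_card (eq_bigr (fun a => \sum_(b | Q a b) 1)); last first.
  by move=> a _; rewrite -sum1_card; apply: eq_bigl => b; rewrite inE.
rewrite pair_big_dep /=; apply: eq_bigl => p; rewrite inE.
by case: p.
Qed.

Lemma edge_count (T : finType) (r : rel T) :
  irreflexive r -> symmetric r ->
  #|[set E : {set T} | [exists u, exists v, (E == [set u; v]) && r u v]]| * 2
  = #|[set p : T * T | r p.1 p.2]|.
Proof.
move=> ir sy.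
set ES := [set E : {set T} | _].
pose f (p : T * T) : {set T} := [set p.1; p.2].
rewrite -!sum1_card.
rewrite (partition_big f (mem ES)) /=; last first.
  by move=> [a b]; rewrite !inE /= => rab; apply/existsP; exists a; apply/existsP; exists b; rewrite eqxx.
rewrite big_distrl /=; apply: eq_bigr => E; rewrite inE => /existsP [u /existsP [v /andP [/eqP -> ruv]]].
rewrite mul1n.
have uv : u != v by apply: contraTneq ruv => ->; rewrite ir.
rewrite (bigD1 (u, v)) /=; last by rewrite inE ruv eqxx.
rewrite (bigD1 (v, u)) /=; last first.
  rewrite inE sy ruv /f /= setUC eqxx /= -pair_eqE /=. idtac.
  by apply/negP => /andP [_ /eqP uvE]; rewrite uvE eqxx in uv.
rewrite big1 // => [[a b]]; rewrite inE /= /f => /andP [/andP [/andP [rab /eqP Eab]]].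
have ha : a \in [set u; v] by rewrite -Eab !inE eqxx.
have hb : b \in [set u; v] by rewrite -Eab !inE eqxx orbT.
move: ha hb rab; rewrite !inE => /orP [] /eqP -> /orP [] /eqP ->; rewrite ?eqxx ?ir //=.
Qed.


Definition colD (V : finType) (k : nat) (g : rel (V * 'I_k)) (u v : V) (i j o : 'I_k)
   (S : {set V}) : {set {ffun V -> 'I_k}} :=
  [set f : {ffun V -> 'I_k} | [&& f u == i, f v == j,
     [forall w, (w \notin S) ==> (f w == o)] &
     [forall w in S, forall z in S, ~~ g (w, f w) (z, f z)]]].

Lemma colD_step (V : finType) (e : rel V) (k : nat) (g : rel (V * 'I_k)) (u v : V) (i j o : 'I_k)
   (S : {set V}) (x : V) (N : nat) :
  symmetric g -> irreflexive g ->
  (forall y x c c', x != y.1 -> g y (x, c) -> g y (x, c') -> c = c') ->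
  (forall a b, g a b -> a.1 != b.1 -> e a.1 b.1) ->
  u \in S -> v \in S -> x \notin S -> #|[set w in S | e x w]| <= N ->
  #|colD g u v i j o S| * (k - N) <= #|colD g u v i j o (x |: S)|.
Proof.
move=> gsym girr gmatch gedge uS vS xS hN.
have xu : x != u by apply: contraNneq xS => ->.
have xv : x != v by apply: contraNneq xS => ->.
pose pairs := [set p : {ffun V -> 'I_k} * 'I_k | (p.1 \in colD g u v i j o S) &&
     [forall w in S, ~~ g (x, p.2) (w, p.1 w)]].
pose upd (p : {ffun V -> 'I_k} * 'I_k) : {ffun V -> 'I_k} :=
  [ffun w => if w == x then p.2 else p.1 w].
have inj : {in pairs &, injective upd}.
  move=> [f c] [f' c']; rewrite !inE /= => /andP [/and4P [_ _ /forallP fo _] _]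
    /andP [/and4P [_ _ /forallP fo' _] _] Heq.
  have ec : c = c'.
    by have := congr1 (fun F : {ffun V -> 'I_k} => F x) Heq; rewrite /upd /= !ffunE eqxx.
  rewrite ec; congr pair; apply/ffunP => w.
  case: (eqVneq w x) => [->|wx].
    by move: (fo x) (fo' x); rewrite xS /= => /eqP -> /eqP ->.
  by have := congr1 (fun F : {ffun V -> 'I_k} => F w) Heq; rewrite /upd /= !ffunE (negbTE wx).
have sub : upd @: pairs \subset colD g u v i j o (x |: S).
  apply/subsetP => F /imsetP [[f c] + ->]; rewrite !inE /=.
  move=> /andP [/and4P [fu fv /forallP fo /forallP fp] /forallP fa].
  rewrite /upd !ffunE /= [u == x]eq_sym (negbTE xu) [v == x]eq_sym (negbTE xv) fu fv /=.
  apply/andP; split.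
    apply/forallP => w; rewrite !inE negb_or ffunE.
    apply/implyP => /andP [/negbTE -> wS] /=; exact: (implyP (fo w)).
  apply/forallP => w; apply/implyP; rewrite !inE => /orP [/eqP ->|wS];
  apply/forallP => z; apply/implyP; rewrite !inE => /orP [/eqP ->|zS];
  rewrite !ffunE ?eqxx.
  - by rewrite girr.
  - have zx : z != x by apply: contraNneq xS => <-.
    by rewrite (negbTE zx); exact: (implyP (fa z) zS).
  - have wx : w != x by apply: contraNneq xS => <-.
    by rewrite (negbTE wx) gsym; exact: (implyP (fa w) wS).
  - have wx : w != x by apply: contraNneq xS => <-.
    have zx : z != x by apply: contraNneq xS => <-.
    rewrite (negbTE wx) (negbTE zx).
    by move: (fp w); rewrite wS => /forallP /(_ z); rewrite zS.
apply: leq_trans (subset_leq_card sub).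
rewrite (card_in_imset inj).
rewrite (card_pairs (fun f => f \in colD g u v i j o S)
          (fun f c => [forall w in S, ~~ g (x, c) (w, f w)])).
rewrite -sum_nat_const (eq_bigl (fun f => f \in colD g u v i j o S)) //; apply: leq_sum => f _.
pose Fb := [set c | [exists w in S, g (x, c) (w, f w)]].
have -> : [set c | [forall w in S, ~~ g (x, c) (w, f w)]] = ~: Fb.
  apply/setP => c; rewrite !inE negb_exists.
  by apply/forallP/forallP => H w; move: (H w); rewrite negb_and implybE.
have hF : #|Fb| <= N.
  pose pk (c : 'I_k) := odflt x [pick w in S | g (x, c) (w, f w)].
  have injF : {in Fb &, injective pk}.
    move=> c c'; rewrite !inE /pk => /existsP [w0 /andP [w0S g0]] /existsP [w1 /andP [w1S g1]].
    case: pickP => [w /andP [wS gw]|]; last by move/(_ w0); rewrite w0S g0.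
    case: pickP => [w' /andP [w'S gw']|]; last by move/(_ w1); rewrite w1S g1.
    move=> /= eww; rewrite -eww in gw' w'S.
    have wx : x != (w, f w).1 by apply: contraNneq xS => ->.
    have h1 : g (w, f w) (x, c) by rewrite gsym.
    have h2 : g (w, f w) (x, c') by rewrite gsym.
    exact: (gmatch (w, f w) x c c' wx h1 h2).
  rewrite -(card_in_imset injF); apply: leq_trans hN; apply: subset_leq_card.
  apply/subsetP => w' /imsetP [c cF ->]; rewrite inE; move: cF; rewrite /Fb inE => /existsP [w0 /andP [w0S g0]]; rewrite /pk.
  case: pickP => [w /andP [wS gw]|]; last by move/(_ w0); rewrite w0S g0.
  rewrite wS /=.
  have xw : (x, c).1 != (w, f w).1 by apply: contraNneq xS => /= ->.
  exact: (gedge _ _ gw xw).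
have := cardsC Fb; rewrite card_ord => hk.
lia.
Qed.


Lemma count_card (T : finType) (a : pred T) (p : seq T) :
  uniq p -> count a p = #|[set x | (x \in p) && a x]|.
Proof.
move=> up; rewrite -size_filter.
have -> : [set x | (x \in p) && a x] = [set x in filter a p].
  by apply/setP => x; rewrite !inE mem_filter andbC.
by rewrite cardsE; apply/esym/card_uniqP; exact: filter_uniq.
Qed.

Lemma colD_greedy (V : finType) (e : rel V) (k d : nat) (g : rel (V * 'I_k)) (u v : V) (i j o : 'I_k)
   (s : seq V) :
  symmetric g -> irreflexive g ->
  (forall y x c c', x != y.1 -> g y (x, c) -> g y (x, c') -> c = c') ->
  (forall a b, g a b -> a.1 != b.1 -> e a.1 b.1) ->
  u != v -> ~~ g (u, i) (v, j) ->
  uniq s -> (forall w, w \in s) ->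
  (forall s1 x s2, s = s1 ++ x :: s2 -> count (e x) s1 < d) ->
  (k - d.+1) ^ (#|V| - 2) <= #|colD g u v i j o setT|.
Proof.
move=> gsym girr gmatch gedge uv guv us alls hcol.
pose K := k - d.+1.
pose nuv := fun x => (x != u) && (x != v).
suff H : forall p1 p2, s = p1 ++ p2 ->
   K ^ (count nuv p1) <= #|colD g u v i j o (u |: (v |: [set w | w \in p1]))|.
  have := H s [::] (esym (cats0 s)).
  have -> : u |: (v |: [set w | w \in s]) = setT.
    by apply/setP => w; rewrite !inE alls !orbT.
  have -> : count nuv s = #|V| - 2; last by [].
  rewrite (count_card _ us).
  have -> : [set x | (x \in s) && nuv x] = ~: [set u; v].
    by apply/setP => w; rewrite !inE alls /nuv negb_or.
  have := cardsC [set u; v]; rewrite cards2 uv; lia.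
elim/last_ind => [|p x IH] p2 hs.
  rewrite expn0 card_gt0; apply/set0Pn.
  exists [ffun w => if w == u then i else if w == v then j else o].
  rewrite inE !ffunE !eqxx [v == u]eq_sym (negbTE uv) /=.
  rewrite eqxx /=; apply/andP; split.
    apply/forallP => w; rewrite ffunE; apply/implyP; rewrite !inE !negb_or.
    by move=> /and3P [/negbTE -> /negbTE -> _].
  apply/forallP => w; apply/implyP; rewrite !inE orbF => /orP [] /eqP ->;
  apply/forallP => z; apply/implyP; rewrite !inE orbF => /orP [] /eqP ->;
  rewrite !ffunE ?eqxx ?girr // [v == u]eq_sym (negbTE uv) ?girr //.
  by rewrite gsym.
have hs' : s = p ++ x :: p2 by rewrite hs cat_rcons.
have := IH _ hs'.
have xp : x \notin p.
  by move: us; rewrite hs' cat_uniq /= negb_or => /and3P [_ /andP [] + _ _].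
rewrite -cats1 count_cat /= addn0 cats1.
case: (boolP (nuv x)) => [/andP [xu xv]|nx] /=; last first.
  rewrite addn0.
  have -> // : u |: (v |: [set w | w \in rcons p x]) = u |: (v |: [set w | w \in p]).
  apply/setP => w; rewrite !inE mem_rcons inE.
  by move: nx; rewrite /nuv negb_and !negbK => /orP [] /eqP ->;
  case: (w \in p); case: (w == u); case: (w == v).
set S := u |: (v |: [set w | w \in p]) => hK.
have -> : u |: (v |: [set w | w \in rcons p x]) = x |: S.
  by apply/setP => w; rewrite !inE mem_rcons inE; case: (w == x); rewrite /= ?orbT.
have xS : x \notin S by rewrite !inE (negbTE xu) (negbTE xv) (negbTE xp).
have hN : #|[set w in S | e x w]| <= d.+1.
  have sub : [set w in S | e x w] \subset u |: (v |: [set w | (w \in p) && e x w]).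
    apply/subsetP => w; rewrite !inE => /andP [/or3P [->|->|->] ->]; by rewrite ?orbT.
  have h0 := subset_leq_card sub.
  have h1 := cardsU1 u (v |: [set w | (w \in p) && e x w]).
  have h2 := cardsU1 v [set w | (w \in p) && e x w].
  have h3 := hcol _ _ _ hs'.
  have up : uniq (p ++ x :: p2) by rewrite -hs'.
  rewrite (count_card _ (subseq_uniq (prefix_subseq p (x :: p2)) up)) in h3.
  have b1 := leq_b1 (u \notin v |: [set w | (w \in p) && e x w]).
  have b2 := leq_b1 (v \notin [set w | (w \in p) && e x w]).
  lia.
have uS : u \in S by rewrite !inE eqxx.
have vS : v \in S by rewrite !inE eqxx orbT.
have step := colD_step i j o gsym girr gmatch gedge uS vS xS hN.
rewrite addn1 expnS mulnC; apply: leq_trans step.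
by rewrite leq_mul2r hK orbT.
Qed.



Lemma cov_sym (W X : finType) (eW : rel W) (h : rel X) (L : W -> {set X}) :
  is_cover eW h L -> symmetric h.
Proof.
case/and5P => /andP [_ /forallP s] _ _ _ _ x y; apply/idP/idP => H.
  by have := forallP (s x) y; rewrite H.
by have := forallP (s y) x; rewrite H.
Qed.

Lemma cov_irr (W X : finType) (eW : rel W) (h : rel X) (L : W -> {set X}) :
  is_cover eW h L -> irreflexive h.
Proof. by case/and5P => /andP [/forallP s _] _ _ _ _ x; apply/negbTE. Qed.

Lemma cov_part (W X : finType) (eW : rel W) (h : rel X) (L : W -> {set X}) :
  is_cover eW h L -> forall x, exists u, x \in L u.
Proof. by case/and5P => _ /forallP H _ _ _ x; apply/existsP. Qed.

Lemma cov_uniq (W X : finType) (eW : rel W) (h : rel X) (L : W -> {set X}) :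
  is_cover eW h L -> forall u v x, x \in L u -> x \in L v -> u = v.
Proof.
case/and5P => _ _ /forallP H _ _ u v x xu xv.
by apply/eqP; have := forallP (forallP (H u) v) x; rewrite xu xv.
Qed.

Lemma cov_clq (W X : finType) (eW : rel W) (h : rel X) (L : W -> {set X}) :
  is_cover eW h L -> forall u x y, x \in L u -> y \in L u -> x != y -> h x y.
Proof.
case/and5P => _ _ _ /forallP H _ u x y xu yu xy.
by have := forallP (forallP (H u) x) y; rewrite xu yu xy.
Qed.

Lemma cov_edge (W X : finType) (eW : rel W) (h : rel X) (L : W -> {set X}) :
  is_cover eW h L -> forall u v x y, x \in L u -> y \in L v -> h x y -> (u == v) || eW u v.
Proof.
case/and5P => _ _ _ _ /andP [/forallP H _] u v x y xu yv hxy.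
by have := forallP (forallP (forallP (H u) v) x) y; rewrite xu yv hxy.
Qed.

Lemma cov_match (W X : finType) (eW : rel W) (h : rel X) (L : W -> {set X}) :
  is_cover eW h L -> forall u v x y y', eW u v -> x \in L u -> y \in L v -> y' \in L v ->
  h x y -> h x y' -> y = y'.
Proof.
case/and5P => _ _ _ _ /andP [_ /forallP H] u v x y y' euv xu yv y'v h1 h2.
have := forallP (H u) v; rewrite euv /= => /forallP /(_ x) /forallP /(_ y) /forallP /(_ y').
by rewrite xu yv y'v h1 h2 => /eqP.
Qed.

Definition Eset (T : finType) (g : rel T) : {set T * T} := [set p | g p.1 p.2].

Lemma ncol_Eset (W T : finType) (g : rel T) :
  ncol W (fun a b => (a, b) \in Eset g) = ncol W g.
Proof.
rewrite /ncol /indep; apply: eq_card => I; rewrite !inE.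
congr andb; apply: eq_forallb => x; congr implb; apply: eq_forallb => y.
by rewrite inE.
Qed.

Lemma canon_cover (V : finType) (e : rel V) (k : nat) (g : rel (V * 'I_k)) :
  irreflexive e -> symmetric g -> irreflexive g ->
  (forall a b, a.1 = b.1 -> a != b -> g a b) ->
  (forall y x c c', x != y.1 -> g y (x, c) -> g y (x, c') -> c = c') ->
  (forall a b, g a b -> a.1 != b.1 -> e a.1 b.1) ->
  is_cover e (fun a b => (a, b) \in Eset g) (@canL V k).
Proof.
move=> eirr gsym girr gclq gmatch gedge.
apply/and5P; split.
- apply/andP; split; apply/forallP => x; rewrite ?inE ?girr //.
  by apply/forallP => y; rewrite !inE gsym; apply/implyP.
- by apply/forallP => x; apply/existsP; exists x.1; rewrite inE.
- apply/forallP => u; apply/forallP => v; apply/forallP => x; rewrite /canL !inE.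
  by apply/implyP => /andP [/eqP <- /eqP <-].
- apply/forallP => u; apply/forallP => x; apply/forallP => y; rewrite /canL !inE.
  apply/implyP => /and3P [/eqP xu /eqP yu xy]; apply: gclq => //; by rewrite xu yu.
apply/andP; split.
  apply/forallP => u; apply/forallP => v; apply/forallP => x; apply/forallP => y; rewrite /canL !inE.
  apply/implyP => /and3P [/eqP <- /eqP <- gxy].
  case: (eqVneq x.1 y.1) => //= xy; exact: gedge.
apply/forallP => u; apply/forallP => v; apply/implyP => euv.
apply/forallP => x; apply/forallP => y; apply/forallP => y'; rewrite /canL !inE.
apply/implyP => /and5P [/eqP xu /eqP yv /eqP y'v g1 g2].
case: y yv g1 => y1 c /= ->; case: y' y'v g2 => y1' c' /= -> g2 g1.
have xv : v != x.1.
  by rewrite xu; apply: contraTneq euv => ->; rewrite eirr.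
by rewrite (gmatch x v c c' xv g1 g2).
Qed.


Definition Lp (V X : finType) (h : rel X) (L : option V -> {set X}) (t : X) (w : V) : {set X} :=
  [set x in L (Some w) | x \notin closed_nbhd h t].

Definition phi (V X : finType) (h : rel X) (L : option V -> {set X}) (t : X) (k : nat)
  (p : V * 'I_k) : X := nth t (enum (Lp h L t p.1)) p.2.

Definition gt (V X : finType) (h : rel X) (L : option V -> {set X}) (t : X) (k : nat) :
  rel (V * 'I_k) := fun a b => h (phi h L t a) (phi h L t b).

Lemma perf_ex (W X : finType) (eW : rel W) (h : rel X) (L : W -> {set X}) u v x :
  perfect_matchings eW h L -> eW u v -> x \in L u -> exists2 y, y \in L v & h x y.
Proof.
move=> /forallP /(_ u) /forallP /(_ v) H euv xu.
by move: H; rewrite euv => /forallP /(_ x); rewrite xu => /existsP [y /andP [? ?]]; exists y.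
Qed.

Lemma card_Lp (V X : finType) (e : rel V) (h : rel X) (L : option V -> {set X}) (m : nat) (t : X) w :
  is_cover (join_rel e) h L -> mfold L m -> perfect_matchings (join_rel e) h L ->
  t \in L None -> #|Lp h L t w| = m - 1.
Proof.
move=> hc hm hp ht.
have [y yw hty] := perf_ex hp (isT : join_rel e None (Some w)) ht.
have -> : Lp h L t w = L (Some w) :\ y.
  apply/setP => x; rewrite /Lp /closed_nbhd !inE negb_or.
  case xw: (x \in L (Some w)); rewrite ?andbT ?andbF //.
  case: (eqVneq x t) => [xt|_] /=.
    by rewrite xt in xw; move: (cov_uniq hc ht xw).
  apply/idP/idP => [|xy].
    by apply: contra => /eqP ->.
  apply/negP => htx; move/negP: xy; apply; apply/eqP.
  exact: (cov_match hc (isT : join_rel e None (Some w)) ht xw yw htx hty).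
move/forallP: hm => /(_ (Some w)) /eqP hm.
by have := cardsD1 y (L (Some w)); rewrite yw hm; lia.
Qed.


Lemma phi_in (V X : finType) (h : rel X) (L : option V -> {set X}) (t : X) (k : nat) :
  (forall w, #|Lp h L t w| = k) -> forall p : V * 'I_k, phi h L t p \in Lp h L t p.1.
Proof.
move=> hk [w i]; rewrite /phi /= -mem_enum; apply: mem_nth.
by rewrite -cardE hk.
Qed.

Lemma phi_inj (V X : finType) (e : rel V) (h : rel X) (L : option V -> {set X}) (t : X) (k : nat) :
  is_cover (join_rel e) h L ->
  (forall w, #|Lp h L t w| = k) -> injective (@phi V X h L t k).
Proof.
move=> hc hk [w i] [w' i'] H.
have := phi_in hk (w, i); have := phi_in hk (w', i'); rewrite H /Lp !inE /=.
move=> /andP [h1 _] /andP [h2 _].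
have ew : w = w' by case: (cov_uniq hc h2 h1).
subst w'; congr pair; apply: val_inj => /=.
move: H; rewrite /phi /=; move/eqP; rewrite nth_uniq ?enum_uniq ?(eqP) //; last 2 first.
- by rewrite -cardE hk.
- by rewrite -cardE hk.
by move/eqP.
Qed.

Lemma phi_surj (V X : finType) (h : rel X) (L : option V -> {set X}) (t : X) (k : nat) :
  (forall w, #|Lp h L t w| = k) -> forall w x, x \in Lp h L t w ->
  exists i : 'I_k, phi h L t (w, i) = x.
Proof.
move=> hk w x xw.
have ilt : index x (enum (Lp h L t w)) < k by rewrite -(hk w) cardE index_mem mem_enum.
exists (Ordinal ilt); rewrite /phi /=; apply: nth_index; by rewrite mem_enum.
Qed.

Lemma phi_L (V X : finType) (h : rel X) (L : option V -> {set X}) (t : X) (k : nat) :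
  (forall w, #|Lp h L t w| = k) -> forall p : V * 'I_k, phi h L t p \in L (Some p.1).
Proof. by move=> hk p; have := phi_in hk p; rewrite /Lp inE => /andP []. Qed.

Lemma phi_notN (V X : finType) (h : rel X) (L : option V -> {set X}) (t : X) (k : nat) :
  (forall w, #|Lp h L t w| = k) -> forall p : V * 'I_k, phi h L t p \notin closed_nbhd h t.
Proof. by move=> hk p; have := phi_in hk p; rewrite /Lp inE => /andP []. Qed.

Lemma gt_props (V X : finType) (e : rel V) (h : rel X) (L : option V -> {set X}) (t : X) (k : nat) :
  is_cover (join_rel e) h L -> (forall w, #|Lp h L t w| = k) ->
  let g := @gt V X h L t k in
  [/\ symmetric g, irreflexive g,
      (forall a b, a.1 = b.1 -> a != b -> g a b),
      (forall y x c c', x != y.1 -> g y (x, c) -> g y (x, c') -> c = c') &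
      (forall a b, g a b -> a.1 != b.1 -> e a.1 b.1)].
Proof.
move=> hc hk g.
have inj := phi_inj hc hk.
have hL := phi_L hk.
have ge : forall a b, g a b -> a.1 != b.1 -> e a.1 b.1.
  move=> a b gab ab; have := cov_edge hc (hL a) (hL b) gab.
  by rewrite /= (inj_eq (@Some_inj _)) (negbTE ab).
split.
- by move=> a b; rewrite /g /gt (cov_sym hc).
- by move=> a; rewrite /g /gt (cov_irr hc).
- move=> a b ab nab; rewrite /g /gt.
  apply: (cov_clq hc (hL a)); first by rewrite ab; exact: hL.
  by apply: contra nab => /eqP /inj ->.
- move=> y x c c' xy g1 g2.
  have eyx : e y.1 x by have := ge _ _ g1; rewrite eq_sym => /(_ xy).
  have := cov_match hc (eyx : join_rel e (Some y.1) (Some x)) (hL y) (hL (x, c)) (hL (x, c')) g1 g2.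
  by move/inj => [].
- exact: ge.
Qed.

Lemma pdp_le (V : finType) (e : rel V) (k : nat) (g : rel (V * 'I_k)) :
  irreflexive e -> symmetric g -> irreflexive g ->
  (forall a b, a.1 = b.1 -> a != b -> g a b) ->
  (forall y x c c', x != y.1 -> g y (x, c) -> g y (x, c') -> c = c') ->
  (forall a b, g a b -> a.1 != b.1 -> e a.1 b.1) ->
  PDP e k <= ncol V g.
Proof.
move=> eirr gsym girr gclq gmatch gedge.
rewrite -ncol_Eset /PDP.
apply: bigmin_le (mem_index_enum (Eset g)) _.
exact: canon_cover.
Qed.


Lemma simple_irr (T : finType) (r : rel T) : simple_graph r -> irreflexive r.
Proof. by case/andP => /forallP H _ x; apply/negbTE. Qed.

Lemma simple_sym (T : finType) (r : rel T) : simple_graph r -> symmetric r.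
Proof.
case/andP => _ /forallP s x y; apply/idP/idP => H.
  by have := forallP (s x) y; rewrite H.
by have := forallP (s y) x; rewrite H.
Qed.

Lemma level_of_perfect (V X : finType) (e : rel V) (h : rel X) (L : option V -> {set X})
   (t : X) (k : nat) :
  simple_graph e -> is_cover (join_rel e) h L -> (forall w, #|Lp h L t w| = k) ->
  (forall u v (a : 'I_k), e u v -> exists c, gt h L t (u, a) (v, c)) ->
  #|cross_edges h L t| = num_edges e * k.
Proof.
move=> hs hc hk hper.
have eirr := simple_irr hs; have esym := simple_sym hs.
have [gsym girr gclq gmatch gedge] := gt_props hc hk.
have inj := phi_inj hc hk.
have hL := phi_L hk.
pose h' := fun a b => [&& h a b, a \notin closed_nbhd h t, b \notin closed_nbhd h t &
   [exists u, exists v, [&& u != v, a \in L (Some u) & b \in L (Some v)]]].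
have -> : cross_edges h L t = [set E | [exists u, exists v, (E == [set u; v]) && h' u v]] by [].
have h'irr : irreflexive h' by move=> a; rewrite /h' (cov_irr hc).
have h'sym : symmetric h'.
  move=> a b; rewrite /h' (cov_sym hc); case: (h b a) => //=.
  case: (a \notin _); case: (b \notin _) => //=.
  apply/existsP/existsP => [] [u /existsP [v /and3P [uv h1 h2]]];
    by exists v; apply/existsP; exists u; rewrite h1 h2 eq_sym uv.
have E1 := edge_count h'irr h'sym.
have E2 := edge_count eirr esym.
pose Q := [set q : (V * 'I_k) * V | e q.1.1 q.2].
have cQ : #|Q| = #|[set p : V * V | e p.1 p.2]| * k.
  pose b (q : (V * 'I_k) * V) := ((q.1.1, q.2), q.1.2).
  have binj : injective b by move=> [[u1 i1] v1] [[u2 i2] v2] [-> -> ->].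
  rewrite -(card_imset _ binj).
  have -> : b @: Q = setX [set p : V * V | e p.1 p.2] [set: 'I_k].
    apply/setP => [[[u v] i]]; rewrite !inE /=; apply/imsetP/idP => [[[[u' i'] v']]|/andP [euv _]].
      by rewrite inE /= => H [-> -> _]; rewrite H.
    by exists ((u, i), v); rewrite ?inE.
  by rewrite cardsX cardsT card_ord.
pose mt (q : (V * 'I_k) * V) := odflt q.1.2 [pick c | gt h L t q.1 (q.2, c)].
have hmt : forall q, q \in Q -> gt h L t q.1 (q.2, mt q).
  move=> [[u a] v]; rewrite inE /= => euv; have [c hc'] := hper u v a euv.
  rewrite /mt; case: pickP => [c' //|]; by move/(_ c); rewrite hc'.
pose psi q := (phi h L t q.1, phi h L t (q.2, mt q)).
have psiinj : {in Q &, injective psi}.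
  move=> q q' qQ q'Q [] /inj e1 /inj [e2 _].
  by case: q q' e1 e2 {qQ q'Q} => [q1 q2] [q1' q2'] /= -> ->.
have : #|psi @: Q| = #|[set p | h' p.1 p.2]|; last first.
  rewrite (card_in_imset psiinj) cQ => H.
  apply/eqP; rewrite -(eqn_pmul2r (isT : 0 < 2)) E1 -H -E2.
  by rewrite mulnAC.
apply: eq_card => [[x y]]; rewrite [in RHS]inE; apply/imsetP/idP.
  move=> [[[u a] v] qQ [-> ->]]; rewrite /h' /=.
  have g1 := hmt _ qQ.
  rewrite [h _ _]g1 !phi_notN //=; apply/existsP; exists u; apply/existsP; exists v.
  move: qQ; rewrite inE /= => euv.
  rewrite (hL (u, a)) (hL (v, mt ((u, a), v))) !andbT.
  by apply: contraTneq euv => ->; rewrite eirr.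
move=> /and4P [hxy xN yN /existsP [u /existsP [v /and3P [uv xu yv]]]].
have xLp : x \in Lp h L t u by rewrite /Lp inE xu xN.
have yLp : y \in Lp h L t v by rewrite /Lp inE yv yN.
have [a ea] := phi_surj hk xLp.
have [c ec] := phi_surj hk yLp.
have euv : e u v.
  by have := cov_edge hc xu yv hxy; rewrite /= (inj_eq (@Some_inj _)) (negbTE uv).
have qQ : ((u, a), v) \in Q by rewrite inE.
exists ((u, a), v) => //.
rewrite /psi /= ea; congr pair.
have g1 := hmt _ qQ.
have g2 : gt h L t (u, a) (v, c) by rewrite /gt ea ec.
have vu : v != (u, a).1 by rewrite eq_sym.
by rewrite (gmatch _ _ _ _ vu g1 g2).
Qed.


Lemma pigeon (V : finType) (k : nat) (g : rel (V * 'I_k)) (u v : V) (a : 'I_k) :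
  symmetric g ->
  (forall y x c c', x != y.1 -> g y (x, c) -> g y (x, c') -> c = c') ->
  u != v -> (forall c, ~~ g (u, a) (v, c)) -> exists b, forall c, ~~ g (v, b) (u, c).
Proof.
move=> gsym gmatch uv ha.
case: (boolP [exists b, [forall c, ~~ g (v, b) (u, c)]]) => [/existsP [b /forallP hb]|H].
  by exists b.
exfalso.
have hb : forall b, exists c, g (v, b) (u, c).
  move=> b; move: H; rewrite negb_exists => /forallP /(_ b); rewrite negb_forall.
  by move=> /existsP [c]; rewrite negbK => gc; exists c.
pose pi b := odflt a [pick c | g (v, b) (u, c)].
have hpi : forall b, g (v, b) (u, pi b).
  move=> b; rewrite /pi; case: pickP => [c //|]; have [c gc] := hb b; by move/(_ c); rewrite gc.
have piinj : injective pi.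
  move=> b b' e.
  have g1 := hpi b; have g2 := hpi b'; rewrite e in g1.
  rewrite gsym in g1; rewrite gsym in g2.
  have vu : v != (u, pi b').1 by rewrite eq_sym.
  exact: (gmatch _ _ _ _ vu g1 g2).
have sub : pi @: [set: 'I_k] \subset ~: [set a].
  apply/subsetP => c /imsetP [b _ ->]; rewrite !inE; apply/eqP => pa.
  by have := ha b; rewrite gsym -pa hpi.
have := subset_leq_card sub; rewrite card_imset // cardsT card_ord.
have := cardsC [set a]; rewrite cards1 card_ord.
have := ltn_ord a; lia.
Qed.

Lemma ncol_split (V : finType) (k : nat) (g g1 : rel (V * 'I_k)) (u v : V) (a b o : 'I_k) :
  (forall x y, g x y -> g1 x y) -> g1 (u, a) (v, b) ->
  ncol V g1 + #|colD g u v a b o setT| <= ncol V g.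
Proof.
move=> gg1 g1ab.
pose gr (f : {ffun V -> 'I_k}) : {set V * 'I_k} := [set (w, f w) | w : V].
have grinj : injective gr.
  move=> f f' H; apply/ffunP => w.
  have : (w, f w) \in gr f' by rewrite -H; apply: imset_f.
  by case/imsetP => w' _ [-> ->].
have cgr : forall f, #|gr f| = #|V|.
  by move=> f; rewrite card_imset // => w w' [].
pose A1 := [set I | indep g1 I & #|I| == #|V|].
pose A2 := gr @: colD g u v a b o setT.
have dis : A1 :&: A2 = set0.
  apply/setP => I; rewrite !inE; apply/negP => /andP [/andP [ind _] /imsetP [f]].
  rewrite inE => /and4P [/eqP fu /eqP fv _ _] eqI; rewrite eqI {eqI} in ind.
  move/forallP: ind => /(_ (u, a)) /implyP; rewrite -fu imset_f //.
  move=> /(_ isT) /forallP /(_ (v, b)) /implyP; rewrite -fv imset_f //= => /(_ isT).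
  by rewrite fu fv g1ab.
have sub : A1 :|: A2 \subset [set I | indep g I & #|I| == #|V|].
  apply/subsetP => I; rewrite !inE => /orP [/andP [ind ->]|].
    rewrite andbT; apply/forallP => x; apply/implyP => xI; apply/forallP => y; apply/implyP => yI.
    apply/negP => gxy; move/forallP: ind => /(_ x); rewrite xI => /forallP /(_ y).
    by rewrite yI (gg1 _ _ gxy).
  case/imsetP => f; rewrite inE => /and4P [_ _ _ /forallP fp] ->.
  rewrite cgr eqxx andbT; apply/forallP => x; apply/implyP => /imsetP [w _ ->].
  apply/forallP => y; apply/implyP => /imsetP [z _ ->].
  by move: (fp w); rewrite in_setT => /forallP /(_ z); rewrite in_setT.
have := subset_leq_card sub; rewrite cardsU dis cards0 subn0.
by rewrite card_imset.
Qed.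


Lemma fiber_bound (V X : finType) (e : rel V) (d k : nat) (h : rel X)
   (L : option V -> {set X}) (t : X) :
  simple_graph e -> col_ok e d -> is_cover (join_rel e) h L ->
  (forall w, #|Lp h L t w| = k) ->
  PDP e k + (#|cross_edges h L t| != num_edges e * k) * (k - d.+1) ^ (#|V| - 2)
   <= ncol V (@gt V X h L t k).
Proof.
move=> hs [s [us alls hcol]] hc hk.
have eirr := simple_irr hs; have esym := simple_sym hs.
have [gsym girr gclq gmatch gedge] := gt_props hc hk.
set g := @gt V X h L t k in gsym girr gclq gmatch gedge *.
have pdp := pdp_le eirr gsym girr gclq gmatch gedge.
case: eqP => /= Hlev; first by rewrite mul0n addn0.
rewrite mul1n.
case: (boolP [forall u, forall v, forall a : 'I_k, e u v ==> [exists c, g (u, a) (v, c)]]) => H.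
  exfalso; apply: Hlev; apply: level_of_perfect => // u v a euv.
  move: H => /forallP /(_ u) /forallP /(_ v) /forallP /(_ a); rewrite euv => /existsP //.
move: H; rewrite negb_forall => /existsP [u]; rewrite negb_forall => /existsP [v].
rewrite negb_forall => /existsP [a]; rewrite negb_imply negb_exists => /andP [euv /forallP ha].
have uv : u != v by apply: contraTneq euv => ->; rewrite eirr.
have [b hb] := pigeon gsym gmatch uv ha.
pose g1 := fun x y => [|| g x y, (x == (u, a)) && (y == (v, b)) | (x == (v, b)) && (y == (u, a))].
have gg1 : forall x y, g x y -> g1 x y by move=> x y gxy; rewrite /g1 gxy.
have g1ab : g1 (u, a) (v, b) by rewrite /g1 !eqxx orbT.
have g1sym : symmetric g1.
  move=> x y; rewrite /g1 gsym; congr orb; rewrite orbC; congr orb; by rewrite andbC.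
have g1irr : irreflexive g1.
  move=> x; rewrite /g1 girr /=; apply/negP => /orP [] /andP [/eqP -> /eqP []] /eqP;
  by rewrite ?(negbTE uv) // eq_sym (negbTE uv).
have g1clq : forall x y, x.1 = y.1 -> x != y -> g1 x y by move=> x y ??; rewrite gg1 // gclq.
have g1edge : forall x y, g1 x y -> x.1 != y.1 -> e x.1 y.1.
  move=> x y; rewrite /g1 => /or3P [gxy|/andP [/eqP -> /eqP ->]|/andP [/eqP -> /eqP ->]] //.
  - exact: gedge.
  - by rewrite esym.
have g1match : forall y x c c', x != y.1 -> g1 y (x, c) -> g1 y (x, c') -> c = c'.
  move=> y x c c' xy.
  have nb1 : forall c0 c1, g y (x, c0) -> (y == (u, a)) && ((x, c1) == (v, b)) -> False.
    by move=> c0 c1 gc /andP [/eqP ey /eqP [ex ec]]; move: (ha c0); rewrite -ey -ex gc.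
  have nb2 : forall c0 c1, g y (x, c0) -> (y == (v, b)) && ((x, c1) == (u, a)) -> False.
    by move=> c0 c1 gc /andP [/eqP ey /eqP [ex ec]]; move: (hb c0); rewrite -ey -ex gc.
  rewrite /g1 => /or3P [g1c|n1|n2] /or3P [g2c|n1'|n2'].
  - exact: gmatch xy g1c g2c.
  - by case: (nb1 _ _ g1c n1').
  - by case: (nb2 _ _ g1c n2').
  - by case: (nb1 _ _ g2c n1).
  - by move: n1 n1' => /andP [_ /eqP [_ ->]] /andP [_ /eqP [_ ->]].
  - by move: n1 n2' => /andP [/eqP -> _] /andP [/eqP [] /eqP]; rewrite (negbTE uv).
  - by case: (nb2 _ _ g2c n2).
  - by move: n2 n1' => /andP [/eqP -> _] /andP [/eqP [] /eqP]; rewrite eq_sym (negbTE uv).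
  - by move: n2 n2' => /andP [_ /eqP [_ ->]] /andP [_ /eqP [_ ->]].
have pdp1 := pdp_le eirr g1sym g1irr g1clq g1match g1edge.
have spl := ncol_split a gg1 g1ab.
have gr := colD_greedy a gsym girr gmatch gedge uv (ha b) us alls hcol.
exact: leq_trans (leq_add pdp1 gr) spl.
Qed.


Lemma sum_fibers (V X : finType) (e : rel V) (k : nat) (h : rel X) (L : option V -> {set X}) :
  is_cover (join_rel e) h L ->
  (forall t, t \in L None -> forall w, #|Lp h L t w| = k) ->
  \sum_(t | t \in L None) ncol V (@gt V X h L t k) <= ncol (option V) h.
Proof.
move=> hc hk.
pose T := [set p : X * {set V * 'I_k} | (p.1 \in L None) &&
            ((indep (@gt V X h L p.1 k) p.2) && (#|p.2| == #|V|))].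
have cT : #|T| = \sum_(t | t \in L None) ncol V (@gt V X h L t k).
  by rewrite /T (card_pairs (fun t => t \in L None)
     (fun t I => (indep (@gt V X h L t k) I) && (#|I| == #|V|))).
rewrite -cT.
pose Phi (p : X * {set V * 'I_k}) := p.1 |: (@phi V X h L p.1 k @: p.2).
have notin : forall p, p \in T -> p.1 \notin (@phi V X h L p.1 k @: p.2).
  move=> [t I]; rewrite inE /= => /andP [ht _]; apply/imsetP => [[q _ eq]].
  have := phi_L (hk t ht) q; rewrite -eq => /(cov_uniq hc ht).
  done.
have Phiinj : {in T &, injective Phi}.
  move=> [t I] [t' I'] pT p'T; rewrite /Phi /= => E.
  have ht : t \in L None by move: pT; rewrite inE => /andP [].
  have ht' : t' \in L None by move: p'T; rewrite inE => /andP [].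
  have tt' : t = t'.
    have : t \in t' |: (@phi V X h L t' k @: I') by rewrite -E setU11.
    rewrite in_setU1 => /orP [/eqP tt //|/imsetP [q _ eq]].
    by have := phi_L (hk t' ht') q; rewrite -eq => /(cov_uniq hc ht).
  subst t'; congr pair.
  have := congr1 (fun A => A :\ t) E; rewrite /= !setU1K ?(notin _ pT) ?(notin _ p'T) //.
  by move/(imset_inj (phi_inj hc (hk t ht))).
rewrite -(card_in_imset Phiinj); apply: subset_leq_card; apply/subsetP => J /imsetP [[t I]].
move=> + ->; rewrite /T inE /= => /and3P [ht ind /eqP cI]; rewrite /Phi /=.
have hkt := hk t ht.
have tn : t \notin (@phi V X h L t k @: I) by apply: (notin (t, I)); rewrite inE ht ind cI eqxx.
rewrite inE cardsU1 tn (card_imset _ (phi_inj hc hkt)) cI card_option eqxx andbT.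
have tphi : forall q, ~~ h t (@phi V X h L t k q).
  by move=> q; have := phi_notN hkt q; rewrite /closed_nbhd inE negb_or => /andP [].
apply/forallP => x; apply/implyP; rewrite in_setU1 => /orP [/eqP ->|/imsetP [q qI ->]];
apply/forallP => y; apply/implyP; rewrite in_setU1 => /orP [/eqP ->|/imsetP [q' q'I ->]].
- by rewrite (cov_irr hc).
- exact: tphi.
- by rewrite (cov_sym hc); exact: tphi.
- by move/forallP: ind => /(_ q); rewrite qI => /forallP /(_ q'); rewrite q'I.
Qed.


Theorem mainTheorem17 (V : finType) (e : rel V) (d m : nat)
    (X : finType) (h : rel X) (L : option V -> {set X}) (s : nat) :
  simple_graph e -> connected_graph e -> is_col e d -> 3 <= d ->
  d + 3 <= m ->
  is_cover (join_rel e) h L -> mfold L m -> perfect_matchings (join_rel e) h L ->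
  s = #|[set t in L None | ~~ level_vertex e h L m t]| ->
  m * PDP e (m - 1) + s * (m - d - 2) ^ (#|V| - 2) <= ncol (option V) h.
Proof.
move=> hs _ [hcol _] _ _ hc hmf hp ->.
set k := m - 1.
have hk : forall t, t \in L None -> forall w, #|Lp h L t w| = k.
  by move=> t ht w; exact: (card_Lp w hc hmf hp ht).
apply: leq_trans (sum_fibers hc hk).
have hK : m - d - 2 = k - d.+1 by rewrite /k; lia.
have fb : \sum_(t in L None) (PDP e k + (#|cross_edges h L t| != num_edges e * k) * (k - d.+1) ^ (#|V| - 2))
   <= \sum_(t in L None) ncol V (@gt V X h L t k).
  by apply: leq_sum => t ht; exact: fiber_bound hs hcol hc (hk t ht).
apply: leq_trans fb.
rewrite big_split /= sum_nat_const -big_distrl /= -hK.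
have -> : #|L None| = m by move/forallP: hmf => /(_ None) /eqP.
rewrite mulnC leq_add2l leq_mul2r; apply/orP; right.
rewrite -big_mkcondr /= sum1dep_card.
by apply: eq_leq; apply: eq_card => t; rewrite !inE.
Qed.
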